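(* Let $\mu$ be a stationary ergodic, elliptic and non-degenerate probability measure on $\Omega$ with $\mathbb P^1(S_+)>0$. Let $\epsilon>0$ and let $y\in\mathbb Z_+$ satisfy $\mathbb P^y(S_+)>1-\epsilon$. Then there exist integers $n_1<n_2<\cdots$ such that $\mathbb P^1(Z^-_{n_i}>y)<3\epsilon$ for all $i\ge1$.
   Context: Notation: $\mathbb N=\{1,2,\dots\}$, $\mathbb Z_+=\{0,1,2,\dots\}$. Cookie environments $\omega\in\Omega=[0,1]^{\mathbb Z\times\mathbb N}$; shift $(\theta\omega)(x,n)=\omega(x+1,n)$; $\mu$ stationary ergodic means $\theta$-invariant and ergodic; elliptic means $\mu((0,1)^{\mathbb Z\times\mathbb N})=1$. Random arrow environment: $a(x,n)=\mathbf 1_{\{u(x,n)<\omega(x,n)\}}$ with $u(x,n)$ i.i.d. Uniform$[0,1]$ independent of $\omega\sim\mu$; $\mathbb P$ denotes the joint law of $(\omega,u)$. A sequence $b\in\{0,1\}^{\mathbb N}$ is non-degenerate if $b(i)\ne b(i+1)$ for infinitely many $i$; $\mu$ is non-degenerate if $\mathbb P$-a.s. every $a(x,\cdot)$ is non-degenerate. For non-degenerate $b$: $U^+_b(0)=0$ and for $x\ge1$, $U^+_b(x)$ is the number of indices $i$ with $b(i)=1$ preceding the $x$-th index $j$ with $b(j)=0$; $U^-_b$ is defined the same way with $0$ and $1$ exchanged. For $y\in\mathbb Z_+$: $Z^+_0=y$, $Z^+_n=U^+_{a(n-1,\cdot)}(Z^+_{n-1})$; $Z^-_0=y$, $Z^-_n=U^-_{a(1-n,\cdot)}(Z^-_{n-1})$.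 $\mathbb P^y$ denotes $\mathbb P$ applied to events about $Z^\pm$ with initial value $y$. $S_+=\{Z^+_n>0\ \forall n\ge0\}$. *)

(* Defs.v *)
From HB Require Import structures.
From mathcomp Require Import all_boot all_order all_algebra.
From mathcomp Require Import all_classical all_reals all_analysis.
Set Implicit Arguments. Unset Strict Implicit. Unset Printing Implicit Defensive.
Import Order.TTheory GRing.Theory Num.Theory.
Local Open Scope classical_set_scope.
Local Open Scope ring_scope.

(* Cookie environments: Omega = [0,1]^(Z x N).  The second coordinate
   n : nat represents the paper's index n+1 \in N = {1,2,...}. *)
Definition env (R : realType) := int -> nat -> R.

Definition env_shift (R : realType) (w : env R) : env R := fun x n => w (x + 1)%R n.

Definition cylinders (R : realType) : set (set (env R)) :=
  [set E | exists (x : int) (n : nat) (B : set R),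
      measurable B /\ E = [set w : env R | B (w x n)]].
Definition env_measurable (R : realType) (A : set (env R)) : Prop :=
  smallest (sigma_algebra setT) (@cylinders R) A.

(* arrow sequences b : nat -> bool (index i stands for the paper's i+1) *)
Definition nondeg_seq (b : nat -> bool) : Prop :=
  forall N, exists i, (N <= i)%N /\ b i != b i.+1.

Definition count_val (b : nat -> bool) (v : bool) (j : nat) : nat :=
  count (fun i => b i == v) (iota 0 j).

Definition kth_index (b : nat -> bool) (v : bool) (x : nat) : nat :=
  xget 0%N [set j | b j = v /\ count_val b v j = x.-1].

Definition Uplus (b : nat -> bool) (x : nat) : nat :=
  if x == 0%N then 0%N else count_val b true (kth_index b false x).
Definition Uminus (b : nat -> bool) (x : nat) : nat :=
  if x == 0%N then 0%N else count_val b false (kth_index b true x).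

Definition arrows (R : realType) (w u : env R) : int -> nat -> bool :=
  fun x n => u x n < w x n.

Fixpoint Zplus (a : int -> nat -> bool) (y : nat) (n : nat) : nat :=
  match n with
  | 0 => y
  | m.+1 => Uplus (a (m%:Z)) (Zplus a y m)
  end.
Fixpoint Zminus (a : int -> nat -> bool) (y : nat) (n : nat) : nat :=
  match n with
  | 0 => y
  | m.+1 => Uminus (a (- (m%:Z))%R) (Zminus a y m)
  end.

Definition Splus (a : int -> nat -> bool) (y : nat) : Prop :=
  forall n, (0 < Zplus a y n)%N.

(* Main.v *)
Require Import Defs.
From HB Require Import structures.
From mathcomp Require Import all_boot all_order all_algebra.
From mathcomp Require Import all_classical all_reals all_analysis.
From mathcomp Require Import zify lra.
From Stdlib Require Import Lia.
Import Order.TTheory GRing.Theory Num.Theory.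
Local Open Scope classical_set_scope.
Local Open Scope ring_scope.



Lemma count_val_S b v j : count_val b v j.+1 = (count_val b v j + (b j == v))%N.
Proof. by rewrite /count_val -addn1 iotaD count_cat /= addn0 add0n. Qed.

Lemma count_val_mono b v i j : (i <= j)%N -> (count_val b v i <= count_val b v j)%N.
Proof.
move=> /subnK <-; elim: (j - i)%N => [|k IH] //=.
by rewrite addSn count_val_S (leq_trans IH) // leq_addr.
Qed.

Definition kcond (b : nat -> bool) v k j := b j = v /\ count_val b v j = k.-1.

Lemma kcond_uniq b v k j1 j2 : kcond b v k j1 -> kcond b v k j2 -> j1 = j2.
Proof.
wlog: j1 j2 / (j1 <= j2)%N.
  move=> H h1 h2; case: (leqP j1 j2) => [/H|/ltnW /H]; first exact.
  by move=> H'; apply/esym/H'.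
move=> le [b1 c1] [b2 c2]; apply/eqP; rewrite eqn_leq le /=; apply: contraT; rewrite -ltnNge => lt.
have := @count_val_mono b v _ _ lt; rewrite count_val_S b1 eqxx c1 c2 addn1.
by rewrite ltnn.
Qed.

Lemma nondeg_inf b v : nondeg_seq b -> forall N, exists j, (N <= j)%N /\ b j = v.
Proof.
move=> nd N; have [i [Ni ne]] := nd N.
case: (b i =P v) => [bi|bi]; first by exists i.
exists i.+1; split; first exact: leqW.
by move: ne bi; case: (b i); case: (b i.+1); case: v.
Qed.

Lemma count_unbounded b v : nondeg_seq b -> forall m, exists j, (m <= count_val b v j)%N.
Proof.
move=> nd; elim=> [|m [j Hj]]; first by exists 0%N.
have [j' [jj' bj']] := nondeg_inf b v nd j.
exists j'.+1; rewrite count_val_S bj' eqxx addn1 ltnS.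
exact: leq_trans Hj (count_val_mono b v j j' jj').
Qed.

Lemma kcond_ex b v k : nondeg_seq b -> (0 < k)%N -> exists j, kcond b v k j.
Proof.
move=> nd k0.
have ex : exists j, (k <= count_val b v j)%N by exact: count_unbounded.
case: (ex_minnP ex) => j Hj Hmin.
case: j Hj Hmin => [|j] Hj Hmin.
  by move: Hj; rewrite /count_val /= leqn0 => /eqP k0'; move: k0; rewrite k0'.
have Hlt : (count_val b v j < k)%N.
  by rewrite ltnNge; apply/negP => /Hmin; rewrite ltnn.
move: Hj; rewrite count_val_S.
case: (b j =P v) => bj /=.
  rewrite addn1 => hk; exists j; split => //.
  by move: Hlt k0 hk; clear; case: k => //= k; lia.
by rewrite addn0 => hk; move: (leq_trans Hlt hk); rewrite ltnn.
Qed.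

Lemma kth_spec b v k : nondeg_seq b -> (0 < k)%N -> kcond b v k (kth_index b v k).
Proof.
move=> nd k0; rewrite /kth_index.
have [j Hj] := kcond_ex b v k nd k0.
have := @xgetPex _ 0%N [set j | b j = v /\ count_val b v j = k.-1].
by apply; exists j.
Qed.

Lemma kth_lt b v k i : nondeg_seq b -> (0 < k)%N ->
  (k <= count_val b v i)%N = (kth_index b v k < i)%N.
Proof.
move=> nd k0; have [bj cj] := kth_spec b v k nd k0.
set j := kth_index b v k in bj cj *.
case: (ltnP j i) => ji.
  apply/(leq_trans _ (count_val_mono b v _ _ ji)).
  by rewrite count_val_S bj eqxx cj addn1 prednK.
apply/negbTE; rewrite -ltnNge.
by apply: (leq_ltn_trans (count_val_mono b v _ _ ji)); rewrite cj prednK.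
Qed.

Lemma dual_step b x z : nondeg_seq b -> (x < Uminus b z)%N -> (Uplus b x < z)%N.
Proof.
move=> nd; rewrite /Uminus /Uplus.
case: (z =P 0%N) => [->|/eqP z0]; first by [].
case: (x =P 0%N) => [->|/eqP x0]; first by move=> _ /=; rewrite lt0n.
move=> h; rewrite ltnNge; apply/negP; rewrite (kth_lt b true z _ nd) ?lt0n // => lt.
have := ltnW h; rewrite (kth_lt b false x _ nd) ?lt0n // => lt2.
by move: (ltn_trans lt lt2); rewrite ltnn.
Qed.

Lemma chain (a : int -> nat -> bool) (y n : nat) :
  (forall x, nondeg_seq (a x)) ->
  (y < Zminus a 1 n.+1)%N -> Zplus (fun x => a (x - n%:Z)) y n.+1 = 0%N.
Proof.
move=> nd.
suff H : forall k, (k <= n.+1)%N ->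
  (Zplus (fun x => a (x - n%:Z)%R) y (n.+1 - k) < Zminus a 1 k)%N ->
  Zplus (fun x => a (x - n%:Z)) y n.+1 = 0%N.
  by move=> h; apply: (H n.+1) => //; rewrite subnn.
elim=> [|k IH] hk.
  by rewrite subn0 /= ltnS leqn0 => /eqP.
move=> h; apply: IH; first exact: ltnW.
have kn : (k <= n)%N by [].
rewrite subSS in h; rewrite subSn //=.
simpl in h; apply: dual_step; first exact: nd.
have -> : ((n - k)%N%:Z - n%:Z = - k%:Z)%R.
  by lia.
exact: h.
Qed.



Definition envp (R : realType) := env R.
HB.instance Definition _ (R : realType) := Choice.on (envp R).
HB.instance Definition _ (R : realType) := isPointed.Build (envp R) (fun _ _ => 0).

Definition EnvM (R : realType) := g_sigma_algebraType (@cylinders R : set (set (envp R))).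

Definition Pi (R : realType) : set (set (envp R * envp R)) :=
  [set F | exists (A : set (env R)) (s : seq (int * nat)) (B : int * nat -> set R),
    [/\ env_measurable A, uniq s, (forall c, c \in s -> measurable (B c)) &
      F = [set p : envp R * envp R | A p.1 /\ forall c, c \in s -> B c (p.2 c.1 c.2)]]].

Definition OmT (R : realType) := g_sigma_algebraType (Pi R).

Lemma count_exists_meas d (T : measurableType d) (I : countType) (F : I -> set T) :
  (forall i, measurable (F i)) -> measurable [set t | exists i, F i t].
Proof.
move=> mF.
have -> : [set t | exists i, F i t] =
  \bigcup_n (if (unpickle n : option I) is Some i then F i else set0).
  apply/seteqP; split => t /=.
    by move=> [i Fi]; exists (pickle i) => //; rewrite pickleK.
  by move=> [n _]; case: (unpickle n) => // i Fi; exists i.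
by apply: bigcupT_measurable => n; case: (unpickle n).
Qed.

Lemma count_forall_meas d (T : measurableType d) (I : countType) (F : I -> set T) :
  (forall i, measurable (F i)) -> measurable [set t | forall i, F i t].
Proof.
move=> mF.
have -> : [set t | forall i, F i t] = ~` [set t | exists i, (~` F i) t].
  apply/seteqP; split => t /=.
    by move=> h [i]; apply; apply: h.
  by move=> h i; apply: contrapT => Ni; apply: h; exists i.
by apply: measurableC; apply: count_exists_meas => i; apply: measurableC.
Qed.

Section gen.
Variables (R : realType).
Local Notation O := (OmT R).

Definition natmeas (f : O -> nat) := forall m, measurable [set p | f p = m].
Definition bmeas (g : O -> bool) := measurable [set p | g p].

Lemma natmeas_const c : natmeas (fun _ => c).
Proof.
move=> m; case: (c =P m) => [->|ne].
  by have -> : [set p : O | m = m] = setT by apply/seteqP; split.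
by have -> : [set p : O | c = m] = set0 by apply/seteqP; split.
Qed.

Lemma natmeas_comp (f : O -> nat) (g : nat -> O -> nat) :
  natmeas f -> (forall j, natmeas (g j)) -> natmeas (fun p => g (f p) p).
Proof.
move=> mf mg m.
have -> : [set p | g (f p) p = m] = \bigcup_j ([set p | f p = j] `&` [set p | g j p = m]).
  apply/seteqP; split => p /=; first by move=> h; exists (f p).
  by move=> [j _ [/= -> ->]].
by apply: bigcupT_measurable => j; apply: measurableI; [exact: mf|exact: mg].
Qed.

Lemma natmeas_fun (f : O -> nat) (h : nat -> nat) : natmeas f -> natmeas (fun p => h (f p)).
Proof. by move=> mf; apply: (@natmeas_comp f (fun j _ => h j)) => // j; apply: natmeas_const. Qed.

Lemma natmeas2 (f g : O -> nat) (h : nat -> nat -> nat) :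
  natmeas f -> natmeas g -> natmeas (fun p => h (f p) (g p)).
Proof.
move=> mf mg; apply: (@natmeas_comp f (fun j p => h j (g p))) => // j.
exact: natmeas_fun.
Qed.

Lemma bmeas_nat (f : O -> nat) (Q : nat -> bool) : natmeas f -> bmeas (fun p => Q (f p)).
Proof.
move=> mf; rewrite /bmeas.
have -> : [set p | Q (f p)] = \bigcup_j ([set p | f p = j] `&` (if Q j then setT else set0)).
  apply/seteqP; split => p /=; first by move=> h; exists (f p) => //; rewrite h.
  by move=> [j _ [/= -> ]]; case: (Q j).
by apply: bigcupT_measurable => j; apply: measurableI => //; case: (Q j).
Qed.

Lemma natmeas_b (g : O -> bool) : bmeas g -> natmeas (fun p => nat_of_bool (g p)).
Proof.
move=> mg m.
case: m => [|[|m]].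
- have -> : [set p | nat_of_bool (g p) = 0%N] = ~` [set p | g p].
    by apply/seteqP; split => p /=; case: (g p).
  exact: measurableC.
- have -> : [set p | nat_of_bool (g p) = 1%N] = [set p | g p].
    by apply/seteqP; split => p /=; case: (g p).
  exact: mg.
- have -> : [set p | nat_of_bool (g p) = m.+2] = set0.
    by apply/seteqP; split => p /=; case: (g p).
  exact: measurable0.
Qed.

Lemma bmeas_neg g : bmeas g -> bmeas (fun p => ~~ g p).
Proof.
move=> mg; rewrite /bmeas; have -> : [set p | ~~ g p] = ~` [set p | g p].
  by apply/seteqP; split => p /=; case: (g p).
exact: measurableC.
Qed.

Lemma bmeas_and g h : bmeas g -> bmeas h -> bmeas (fun p => g p && h p).
Proof.
move=> mg mh; rewrite /bmeas; have -> : [set p | g p && h p] = [set p | g p] `&` [set p | h p].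
  by apply/seteqP; split => p /=; [move/andP|move=> [-> ->]].
exact: measurableI.
Qed.

Lemma bmeas_eqb g h : bmeas g -> bmeas h -> bmeas (fun p => g p == h p).
Proof.
move=> mg mh; rewrite /bmeas.
have -> : [set p | g p == h p] = [set p | (g p && h p) || (~~ g p && ~~ h p)].
  by apply/seteqP; split => p /=; case: (g p); case: (h p).
have -> : [set p | (g p && h p) || (~~ g p && ~~ h p)] =
   [set p | g p && h p] `|` [set p | ~~ g p && ~~ h p].
  by apply/seteqP; split => p /=; [move/orP|move=> [|] ->; rewrite ?orbT].
by apply: measurableU; apply: bmeas_and => //; apply: bmeas_neg.
Qed.

Lemma bmeas_const b : bmeas (fun _ => b).
Proof. by rewrite /bmeas; case: b; [have -> : [set p : O | true] = setT by apply/seteqP|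
  have -> : [set p : O | false] = set0 by apply/seteqP; split]. Qed.

Definition arr (p : O) := arrows p.1 p.2.

Lemma Pi_w (B : set R) x n : measurable B -> Pi R [set p | B (p.1 x n)].
Proof.
move=> mB; exists [set w | B (w x n)], [::], (fun _ => set0); split => //.
  by apply: sub_sigma_algebra; exists x, n, B.
by apply/seteqP; split => p /=; [move=> h; split|case].
Qed.

Lemma Pi_u (B : set R) x n : measurable B -> Pi R [set p | B (p.2 x n)].
Proof.
move=> mB; exists setT, [:: (x, n)], (fun _ => B); split.
- exact: (@measurableT _ (EnvM R)).
- by [].
- by move=> c _.
apply/seteqP; split => p /=.
  by move=> h; split => // c; rewrite inE => /eqP ->.
by move=> [_ h]; exact: (h (x, n) (mem_head _ _)).
Qed.

Lemma arr_meas x n : bmeas (fun p => arr p x n).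
Proof.
rewrite /bmeas /arr /arrows.
have -> : [set p : O | p.2 x n < p.1 x n] = [set p | exists q : rat,
   ([set p : O | p.2 x n \in `]-oo, ratr q[] `&` [set p : O | p.1 x n \in `]ratr q, +oo[]) p].
  apply/seteqP; split => p /=.
    move=> /rat_in_itvoo [q]; rewrite in_itv /= => /andP[h1 h2]; exists q; split.
      by rewrite /= in_itv /=.
    by rewrite /= in_itv /= andbT.
  move=> [q [/=]]; rewrite !in_itv /= andbT => h1 h2.
  exact: lt_trans h1 h2.
apply: count_exists_meas => q; apply: measurableI.
  by apply: sub_sigma_algebra; exact: (Pi_u [set` `]-oo, ratr q[] x n (measurable_itv _)).
by apply: sub_sigma_algebra; exact: (Pi_w [set` `]ratr q, +oo[] x n (measurable_itv _)).
Qed.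

Lemma count_val_meas x v j : natmeas (fun p => count_val (arr p x) v j).
Proof.
elim: j => [|j IH].
  exact: natmeas_const.
have -> : (fun p => count_val (arr p x) v j.+1) =
   (fun p => count_val (arr p x) v j + nat_of_bool (arr p x j == v))%N.
  by apply/funext => p; rewrite count_val_S.
apply: natmeas2 => //; apply: natmeas_b; apply: bmeas_eqb.
  exact: arr_meas.
exact: bmeas_const.
Qed.

Lemma kth_meas x v k : natmeas (fun p => kth_index (arr p x) v k).
Proof.
pose kc j p := (arr p x j == v) && (count_val (arr p x) v j == k.-1).
have kcE j p : kc j p <-> kcond (arr p x) v k j.
  rewrite /kc /kcond; split; first by move=> /andP[/eqP -> /eqP ->].
  by move=> [-> ->]; rewrite !eqxx.
have mkc j : bmeas (kc j).
  apply: bmeas_and.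
    by apply: bmeas_eqb; [exact: arr_meas|exact: bmeas_const].
  exact: (@bmeas_nat _ (fun c => c == k.-1) (count_val_meas x v j)).
move=> m.
have -> : [set p | kth_index (arr p x) v k = m] =
  [set p | kc m p] `|` ([set p | forall j, (~` [set p | kc j p]) p] `&` (if m == 0%N then setT else set0)).
  apply/seteqP; split => p /=.
    case: (pselect (exists j, kcond (arr p x) v k j)) => [[j Hj]|NE].
      have -> : kth_index (arr p x) v k = j.
        by apply: xget_unique => // j' Hj'; exact: (kcond_uniq _ _ _ _ _ Hj' Hj).
      by move=> <-; left; apply/kcE.
    have -> : kth_index (arr p x) v k = 0%N.
      by apply: xgetPN => j Hj; apply: NE; exists j.
    move=> <-; right; split => // j /kcE Hj; apply: NE; by exists j.
  case=> [/kcE Hm|[Hn]].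
    by apply: xget_unique => // j' Hj'; exact: (kcond_uniq _ _ _ _ _ Hj' Hm).
  case: (m =P 0%N) => // -> _; apply: xgetPN => j /kcE; exact: Hn.
apply: measurableU; first exact: mkc.
apply: measurableI; last by case: (m == 0%N).
by apply: count_forall_meas => j; apply: measurableC; apply: mkc.
Qed.

Lemma Uplus_meas x k : natmeas (fun p => Uplus (arr p x) k).
Proof.
rewrite /Uplus; case: (k == 0%N); first exact: natmeas_const.
exact: (@natmeas_comp (fun p => kth_index (arr p x) false k)
  (fun j p => count_val (arr p x) true j) (kth_meas _ _ _) (count_val_meas _ _)).
Qed.

Lemma Uminus_meas x k : natmeas (fun p => Uminus (arr p x) k).
Proof.
rewrite /Uminus; case: (k == 0%N); first exact: natmeas_const.
exact: (@natmeas_comp (fun p => kth_index (arr p x) true k)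
  (fun j p => count_val (arr p x) false j) (kth_meas _ _ _) (count_val_meas _ _)).
Qed.

Lemma Zplus_meas y n : natmeas (fun p => Zplus (arr p) y n).
Proof.
elim: n => [|n IH] /=; first exact: natmeas_const.
exact: (@natmeas_comp _ (fun j p => Uplus (arr p n) j) IH (Uplus_meas _)).
Qed.

Lemma Zminus_meas y n : natmeas (fun p => Zminus (arr p) y n).
Proof.
elim: n => [|n IH] /=; first exact: natmeas_const.
exact: (@natmeas_comp _ (fun j p => Uminus (arr p (- n%:Z)) j) IH (Uminus_meas _)).
Qed.

Lemma ND_meas : measurable [set p : O | forall x, nondeg_seq (arr p x)].
Proof.
apply: count_forall_meas => x; apply: count_forall_meas => N.
apply: count_exists_meas => i.
set S := (X in _.-measurable X).
have -> : S =
  [set p | (N <= i)%N && (arr p x i != arr p x i.+1)].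
  by apply/seteqP; split => p /=; [move=> [-> ->]|move/andP].
apply: bmeas_and; first exact: bmeas_const.
by apply: bmeas_neg; apply: bmeas_eqb; apply: arr_meas.
Qed.

Lemma SP_meas y : measurable [set p : O | forall n, (0 < Zplus (arr p) y n)%N].
Proof.
apply: count_forall_meas => n.
exact: (@bmeas_nat _ (fun c => 0 < c)%N (Zplus_meas y n)).
Qed.

End gen.



Definition shw {R : realType} (K : int) (w : env R) : env R := fun x n => w (x + K) n.
Definition shp {R : realType} (K : int) (p : OmT R) : OmT R := (shw K p.1, shw K p.2).
Definition shc (K : int) (c : int * nat) : int * nat := (c.1 + K, c.2).

Lemma shw0 {R : realType} (w : env R) : shw 0 w = w.
Proof. by apply/funext => x; apply/funext => m; rewrite /shw addr0. Qed.

Lemma shwD {R : realType} K1 K2 (w : env R) : shw K1 (shw K2 w) = shw (K1 + K2) w.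
Proof. by apply/funext => x; apply/funext => m; rewrite /shw addrA. Qed.

Lemma shc_inv K c : shc (- K) (shc K c) = c.
Proof. by case: c => x m; rewrite /shc /= addrK. Qed.

Lemma triv_pre (A B : Type) (f : A -> B) (F : nat -> set B) :
  trivIset setT F -> trivIset setT (fun k => f @^-1` F k).
Proof. by move=> tF i j _ _ [x [hi hj]]; apply: tF => //; exists (f x). Qed.

Lemma Pi_setI (R : realType) : setI_closed (Pi R).
Proof.
move=> _ _ [A1 [s1 [B1 [mA1 u1 mB1 ->]]]] [A2 [s2 [B2 [mA2 u2 mB2 ->]]]].
exists (A1 `&` A2), (undup (s1 ++ s2)),
  (fun c => (if c \in s1 then B1 c else setT) `&` (if c \in s2 then B2 c else setT)); split.
- exact: (@measurableI _ (EnvM R)).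
- exact: undup_uniq.
- move=> c _; apply: measurableI.
    by case: ifP => h; [exact: mB1|exact: measurableT].
  by case: ifP => h; [exact: mB2|exact: measurableT].
apply/seteqP; split => p /=.
  move=> [[h1 f1] [h2 f2]]; split => // c _; split.
    by case: ifP => hc //; exact: f1.
  by case: ifP => hc //; exact: f2.
move=> [[h1 h2] f]; split; split => // c hc.
  have [] := f c; first by rewrite mem_undup mem_cat hc.
  by rewrite hc.
have [] := f c; first by rewrite mem_undup mem_cat hc orbT.
by rewrite hc.
Qed.

Lemma Pi_shift {R : realType} K (A : set (env R)) s (B : int * nat -> set R) :
  shp K @^-1` [set p : OmT R | A p.1 /\ forall c, c \in s -> B c (p.2 c.1 c.2)] =
  [set p : OmT R | [set w | A (shw K w)] p.1 /\
     forall c, c \in map (shc K) s -> B (shc (- K) c) (p.2 c.1 c.2)].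
Proof.
apply/seteqP; split => p /= [hA h]; split => // c.
  move=> /mapP [[x m] hc0 ->]; rewrite shc_inv.
  exact: (h _ hc0).
case: c => x m hc; have := h (shc K (x, m)) (map_f _ hc).
by rewrite shc_inv.
Qed.

Section prob.
Variables (d : measure_display) (T : measurableType d) (R : realType)
  (P : probability T R) (om u : T -> env R).
Hypothesis om_meas : forall x n, measurable_fun setT (fun t => om t x n).
Hypothesis u_meas : forall x n, measurable_fun setT (fun t => u t x n).
Hypothesis u_law : forall (A : set (env R)) (s : seq (int * nat)) (B : int * nat -> set R),
      env_measurable A -> uniq s -> (forall c, c \in s -> measurable (B c)) ->
      P [set t | A (om t) /\ forall c, c \in s -> B c (u t c.1 c.2)]
      = (P (om @^-1` A) * \big[*%E/1%E]_(c <- s) (@lebesgue_measure R) (B c `&` `[0%R, 1%R]))%E.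
Hypothesis stat : forall A : set (env R), env_measurable A ->
      P (om @^-1` [set w : env R | A (env_shift w)]) = P (om @^-1` A).

Definition ev (t : T) : OmT R := (om t, u t).

Lemma om_pre (A : set (env R)) : env_measurable A -> measurable (om @^-1` A).
Proof.
move=> mA.
have mf : measurable_fun setT (om : T -> EnvM R).
  apply: (measurability (@cylinders R : set (set (EnvM R)))) => //.
  move=> _ [C [x [n [B [mB ->]]]] <-].
  by have := om_meas x n measurableT; move=> /(_ B mB).
by rewrite -[om @^-1` A]setTI; exact: (mf measurableT A mA).
Qed.

Lemma Pi_pre (A : set (env R)) (s : seq (int * nat)) (B : int * nat -> set R) : env_measurable A -> (forall c, c \in s -> measurable (B c)) ->
  measurable [set t | A (om t) /\ forall c, c \in s -> B c (u t c.1 c.2)].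
Proof.
elim: s => [|c s IH] mA mB.
  have -> : [set t | A (om t) /\ forall c, c \in [::] -> B c (u t c.1 c.2)] = om @^-1` A.
    by apply/seteqP; split => t /=; [case|move=> h; split].
  exact: om_pre.
have -> : [set t | A (om t) /\ forall c', c' \in c :: s -> B c' (u t c'.1 c'.2)] =
   [set t | A (om t) /\ forall c, c \in s -> B c (u t c.1 c.2)] `&` [set t | B c (u t c.1 c.2)].
  apply/seteqP; split => t /=.
    move=> [hA h]; split; last by apply: h; exact: mem_head.
    by split => // c' hc'; apply: h; rewrite inE hc' orbT.
  move=> [[hA h] hc]; split => // c'; rewrite inE => /orP [/eqP ->|] //; exact: h.
apply: measurableI; first by apply: IH => // c' hc'; apply: mB; rewrite inE hc' orbT.
rewrite -[X in measurable X]setTI.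
by have := u_meas c.1 c.2 measurableT; move=> /(_ _ (mB c (mem_head _ _))).
Qed.

Lemma ev_meas : measurable_fun setT ev.
Proof.
apply: (measurability (Pi R : set (set (OmT R)))) => //.
move=> _ [F [A [s [B [mA us mB ->]]]] <-].
rewrite setTI; exact: Pi_pre.
Qed.

Lemma ev_pre (F : set (OmT R)) : measurable F -> measurable (ev @^-1` F).
Proof. by move=> mF; rewrite -[ev @^-1` F]setTI; by have := ev_meas measurableT; move=> /(_ _ mF). Qed.

Lemma shw_meas K : measurable_fun setT (shw K : EnvM R -> EnvM R).
Proof.
apply: (measurability (@cylinders R : set (set (EnvM R)))) => //.
move=> _ [C [x [n [B [mB ->]]]] <-].
rewrite setTI; apply: sub_sigma_algebra; exists (x + K), n, B; split => //.
Qed.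

Lemma env_meas_sh K (A : set (env R)) : env_measurable A -> env_measurable [set w | A (shw K w)].
Proof.
move=> mA; have := shw_meas K measurableT (A : set (EnvM R)) mA.
by rewrite setTI.
Qed.

Lemma shp_meas K : measurable_fun setT (@shp R K).
Proof.
apply: (measurability (Pi R : set (set (OmT R)))) => //.
move=> _ [F [A [s [B [mA us mB ->]]]] <-].
rewrite setTI Pi_shift; apply: sub_sigma_algebra.
exists [set w | A (shw K w)], (map (shc K) s), (fun c => B (shc (- K) c)); split => //.
- exact: env_meas_sh.
- rewrite map_inj_uniq // => [[x1 m1]] [x2 m2] /= [h1 h2].
  by rewrite h2; congr pair; apply: (addIr K).
- by move=> c /mapP [c0 hc0 ->]; rewrite shc_inv; exact: mB.
Qed.

Lemma shp_pre K (F : set (OmT R)) : measurable F -> measurable (ev @^-1` (shp K @^-1` F)).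
Proof.
move=> mF; apply: ev_pre; rewrite -[shp K @^-1` F]setTI; exact: (shp_meas K measurableT _ mF).
Qed.

Lemma stat_pos (n : nat) (A : set (env R)) : env_measurable A ->
  P (om @^-1` [set w | A (shw n%:Z w)]) = P (om @^-1` A).
Proof.
elim: n A => [|n IH] A mA.
  by have -> : [set w | A (shw 0%:Z w)] = A by apply/funext => w; have e : shw 0%:Z w = w := shw0 w; rewrite /= e.
have -> : [set w | A (shw n.+1%:Z w)] = [set w | [set w | A (shw n%:Z w)] (env_shift w)].
  by apply/funext => w /=; rewrite (_ : env_shift w = shw 1 w) // shwD addrC -intS.
by rewrite stat ?IH //; exact: env_meas_sh.
Qed.

Lemma stat_neg (n : nat) (A : set (env R)) : env_measurable A ->
  P (om @^-1` [set w | A (shw (- n%:Z) w)]) = P (om @^-1` A).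
Proof.
move=> mA; rewrite -(stat_pos n _ (env_meas_sh (- n%:Z) A mA)).
congr (P (om @^-1` _)); apply/funext => w /=.
by rewrite shwD addNr shw0.
Qed.

Lemma shift_eq (n : nat) (F : set (OmT R)) : measurable F ->
  P (ev @^-1` (shp (- n%:Z) @^-1` F)) = P (ev @^-1` F).
Proof.
set K := - n%:Z.
pose H := [set F : set (OmT R) | measurable F /\ P (ev @^-1` (shp K @^-1` F)) = P (ev @^-1` F)].
suff sH : measurable `<=` H by move=> mF; case: (sH F mF).
apply: (lambda_system_subset (@Pi_setI R)); last by [].
- apply/dynkin_lambda_system; split.
  + by split => //; exact: measurableT.
  + move=> X [mX hX]; split; first exact: measurableC.
    rewrite -!preimage_setC !probability_setC ?hX //.
      exact: ev_pre.
    exact: shp_pre.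
  + move=> G tG hG; split.
      by apply: bigcupT_measurable => k; case: (hG k).
    rewrite !preimage_bigcup !measure_bigcup //.
    * apply: eq_eseriesr => k _; by case: (hG k).
    * by move=> k _; apply: ev_pre; case: (hG k).
    * exact: triv_pre.
    * by move=> k _; apply: shp_pre; case: (hG k).
    * by apply: triv_pre; apply: triv_pre.
- move=> _ [A [s [B [mA us mB ->]]]]; split.
    by apply: sub_sigma_algebra; exists A, s, B.
  rewrite Pi_shift.
  have mA' : env_measurable [set w | A (shw K w)] by exact: env_meas_sh.
  have us' : uniq (map (shc K) s).
    rewrite map_inj_uniq // => [[x1 m1]] [x2 m2] /= [h1 h2].
    by rewrite h2; congr pair; apply: (addIr K).
  have mB' : forall c, c \in map (shc K) s -> measurable (B (shc (- K) c)).
    by move=> c /mapP [c0 hc0 ->]; rewrite shc_inv; exact: mB.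
  have h1 := u_law _ _ _ mA us mB.
  have h2 := u_law _ _ _ mA' us' mB'.
  etransitivity; first exact: h2.
  etransitivity; last exact: (esym h1).
  rewrite stat_neg // big_map; congr (_ * _)%E.
  by apply: eq_bigr => c _; rewrite shc_inv.
Qed.

End prob.



Theorem lemma4p7 (d : measure_display) (T : measurableType d) (R : realType)
  (P : probability T R) (om u : T -> env R)
  (* omega is an Omega-valued random variable with law mu *)
  (om_meas : forall x n, measurable_fun setT (fun t => om t x n))
  (om_range : forall t x n, 0 <= om t x n <= 1)
  (* u : measurable, and (u(x,n)) i.i.d. Uniform[0,1] independent of omega *)
  (u_meas : forall x n, measurable_fun setT (fun t => u t x n))
  (u_law : forall (A : set (env R)) (s : seq (int * nat)) (B : int * nat -> set R),
      env_measurable A -> uniq s -> (forall c, c \in s -> measurable (B c)) ->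
      P [set t | A (om t) /\ forall c, c \in s -> B c (u t c.1 c.2)]
      = (P (om @^-1` A) * \big[*%E/1%E]_(c <- s) (@lebesgue_measure R) (B c `&` `[0%R, 1%R]))%E)
  (* mu stationary *)
  (stat : forall A : set (env R), env_measurable A ->
      P (om @^-1` [set w : env R | A (env_shift w)]) = P (om @^-1` A))
  (* mu ergodic *)
  (ergo : forall A : set (env R), env_measurable A ->
      [set w : env R | A (env_shift w)] = A -> P (om @^-1` A) = 0%E \/ P (om @^-1` A) = 1%E)
  (* mu elliptic *)
  (ellip : P [set t | forall x n, 0 < om t x n < 1] = 1%E)
  (* mu non-degenerate *)
  (nondeg : P [set t | forall x, nondeg_seq (arrows (om t) (u t) x)] = 1%E)
  (* P^1(S_+) > 0 *)
  (surv1 : (0 < P [set t | Splus (arrows (om t) (u t)) 1])%E)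
  (eps : R) (eps_gt0 : 0 < eps) (y : nat)
  (survy : ((1 - eps)%:E < P [set t | Splus (arrows (om t) (u t)) y])%E) :
  exists ns : nat -> nat, (forall i, (ns i < ns i.+1)%N) /\
    forall i, (P [set t | (y < Zminus (arrows (om t) (u t)) 1 (ns i))%N] < (3 * eps)%:E)%E.
Proof.
exists (fun i => i.+1); split => // n.
pose ev := @ev _ _ _ om u.
pose ND := [set t | forall x, nondeg_seq (arrows (om t) (u t) x)].
pose F := [set p : OmT R | Zplus (arr R p) y n.+1 = 0%N].
pose E := ev @^-1` (shp (- n%:Z) @^-1` F).
pose ZM := [set t | (y < Zminus (arrows (om t) (u t)) 1 n.+1)%N].
pose SP := [set t | Splus (arrows (om t) (u t)) y].
have mF : measurable F := Zplus_meas R y n.+1 0%N.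
have mND : measurable ND := @ev_pre _ _ _ om u om_meas u_meas _ (ND_meas R).
have mZM : measurable ZM := @ev_pre _ _ _ om u om_meas u_meas _
  (bmeas_nat R _ (fun c => y < c)%N (Zminus_meas R 1 n.+1)).
have mE : measurable E := @shp_pre _ _ _ om u om_meas u_meas _ _ mF.
have mSP : measurable SP := @ev_pre _ _ _ om u om_meas u_meas _ (SP_meas R y).
have mEF : measurable (ev @^-1` F) := @ev_pre _ _ _ om u om_meas u_meas _ mF.
have sub1 : ZM `<=` E `|` ~` ND.
  move=> t Zt; case: (pselect (ND t)) => [h|h]; [left|by right].
  exact: (chain _ _ _ h Zt).
have sub2 : ev @^-1` F `<=` ~` SP.
  move=> t Ft SPt; have := SPt n.+1; have -> : Zplus (arrows (om t) (u t)) y n.+1 = 0%N := Ft; by [].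
have PND : P (~` ND) = 0%E by rewrite probability_setC // nondeg subee.
have h1 : (P ZM <= P E)%E.
  have mU : measurable (E `|` ~` ND) := measurableU _ _ mE (measurableC mND).
  have e1 := le_measure P (mem_set mZM) (mem_set mU) sub1.
  have e2 : (P (E `|` ~` ND) <= P E + P (~` ND))%E := measureU2 P mE (measurableC mND).
  by rewrite PND adde0 in e2; exact: le_trans e1 e2.
have h2 : P E = P (ev @^-1` F) := @shift_eq _ _ _ P om u om_meas u_meas u_law stat n F mF.
have h3 : (P (ev @^-1` F) <= P (~` SP))%E.
  exact: (le_measure P (mem_set mEF) (mem_set (measurableC mSP)) sub2).
rewrite probability_setC // in h3.
have s1 : (P SP <= 1)%E := probability_le1 P mSP.
move: survy s1 h3; rewrite -/SP.
case: (P SP) => [r||] //.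
  move=> hr r1 h3.
  apply: (le_lt_trans h1); rewrite h2; apply: (le_lt_trans h3).
  rewrite -EFinB lte_fin; rewrite lte_fin in hr; lra.
Qed.
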